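(* Suppose $(a_1,a_2,a_3)\in\mathbb Z^3$ is one of the twelve triples $$(0,-2,1),\ (1,0,0),\ (-2,0,0),\ (0,1,-2),\ (1,-4,0),\ (0,2,1),\ (-4,1,2),\ (2,0,-4),\ (0,-5,1),\ (1,3,0),\ (-5,0,3),\ (3,1,-5),$$ or belongs to one of the four infinite families $(0,-2m-2,2m+1)$, $(2m+1,0,0)$, $(-2m-2,0,0)$, $(0,2m+1,-2m-2)$ with $m$ a nonnegative integer. Then the indefinite integral $$\int \frac{(1-k^2)^{a_1}(1+k-k^2)^{a_2}(1-4k-k^2)^{a_3}}{k^{a_1+a_2+a_3+1}}\,dk$$ is a rational function of $k$; that is, there is a rational function $g(k)$ whose derivative equals the integrand. *)

(* Defs.v *)
From HB Require Import structures.
From mathcomp Require Import all_boot all_order all_algebra.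
Set Implicit Arguments. Unset Strict Implicit. Unset Printing Implicit Defensive.
Import Order.TTheory GRing.Theory Num.Theory.
Local Open Scope ring_scope.

(* f^z for an integer exponent z, split as (numerator, denominator) *)
Definition pnum (R : nzRingType) (f : {poly R}) (z : int) : {poly R} :=
  if (0 <= z) then f ^+ `|z|%N else 1.
Definition pden (R : nzRingType) (f : {poly R}) (z : int) : {poly R} :=
  if (0 <= z) then 1 else f ^+ `|z|%N.

Definition f1 (R : nzRingType) : {poly R} := 1 - 'X^2.
Definition f2 (R : nzRingType) : {poly R} := 1 + 'X - 'X^2.
Definition f3 (R : nzRingType) : {poly R} := 1 - 4%:R *: 'X - 'X^2.

Definition integrand_num (R : nzRingType) (a1 a2 a3 : int) : {poly R} :=
  pnum (f1 R) a1 * pnum (f2 R) a2 * pnum (f3 R) a3 * pden 'X (a1 + a2 + a3 + 1).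
Definition integrand_den (R : nzRingType) (a1 a2 a3 : int) : {poly R} :=
  pden (f1 R) a1 * pden (f2 R) a2 * pden (f3 R) a3 * pnum 'X (a1 + a2 + a3 + 1).

(* The rational function N/D has a rational antiderivative g = p/q (q != 0):
   (p/q)' = (p' q - p q') / q^2 = N / D, cleared of denominators. *)
Definition has_rational_antiderivative (R : comNzRingType) (N D : {poly R}) : Prop :=
  exists p q : {poly R}, q != 0 /\ (p^`() * q - p * q^`()) * D = N * q ^+ 2.

Definition special_triple (a1 a2 a3 : int) : Prop :=
  (a1, a2, a3) \in
    ([:: (0, -2, 1); (1, 0, 0); (-2, 0, 0); (0, 1, -2); (1, -4, 0); (0, 2, 1);
        (-4, 1, 2); (2, 0, -4); (0, -5, 1); (1, 3, 0); (-5, 0, 3); (3, 1, -5)]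
       : seq (int * int * int))
  \/ exists m : nat,
       let m' := (m%:Z)%R in
       (a1, a2, a3) = (0, - (2 * m' + 2), 2 * m' + 1)
    \/ (a1, a2, a3) = (2 * m' + 1, 0, 0)
    \/ (a1, a2, a3) = (- (2 * m' + 2), 0, 0)
    \/ (a1, a2, a3) = (0, 2 * m' + 1, - (2 * m' + 2)).

(* Main.v *)
Require Import Defs.
From mathcomp Require Import all_boot all_order all_algebra.
Local Open Scope ring_scope.
Require Import Defs.
From mathcomp Require Import all_boot all_order all_algebra.
From mathcomp Require Import ring.
Import GRing.Theory Num.Theory.
Local Open Scope ring_scope.

Fixpoint gseq (R : fieldType) (b : R) (U V T : {poly R}) (m : nat) : {poly R} :=
  match m with
  | 0 => U
  | m'.+1 => ((m'.*2.+3)%:R)^-1 *: (U * T ^+ m'.+1 + ((m'.+1).*2)%:R * b%:P * V ^+ 2 * gseq R b U V T m')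
  end.
Arguments gseq {R}.

Lemma gseqP (R : numFieldType) (a b : R) (U V T : {poly R}) (m : nat) :
  T = a%:P * U ^+ 2 + b%:P * V ^+ 2 ->
  (gseq b U V T m)^`() * V - (m.*2.+1)%:R * gseq b U V T m * V^`()
    = T ^+ m * (U^`() * V - U * V^`()).
Proof.
move=> HT; have HT' : T^`() = a%:P * (2%:R * U * U^`()) + b%:P * (2%:R * V * V^`()).
  by rewrite HT !derivE; ring.
elim: m => [|m IH] /=; first by rewrite expr0 mul1r mul1r.
set h := U * _ + _.
have Hh : h^`() * V - (m.*2.+3)%:R * h * V^`() = (m.*2.+3)%:R * (T ^+ m.+1 * (U^`() * V - U * V^`())).
  move: IH; set g := gseq _ _ _ _ _; set g' := g^`() => IH.
  rewrite /h -!polyC_natr !derivE deriv_exp succnK HT' -/g'.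
  rewrite exprS; set Tm := T ^+ m.
  rewrite [X in X * Tm]HT.
  apply/eqP; rewrite -subr_eq0; apply/eqP.
  transitivity (((m.+1).*2)%:R%:P * b%:P * V^+2 * (g' * V - (m.*2.+1)%:R * g * V^`() - Tm * (U^`() * V - U * V^`()))).
    rewrite ?polyC_natr -!muln2 -/g; clearbody h Tm g' g. ring.
  rewrite polyC_natr.
  by rewrite IH subrr mulr0.
have Hc : ((m.*2.+3)%:R^-1 : R)%:P * (m.*2.+3)%:R = 1.
  by rewrite -polyC_natr -polyCM mulVf // pnatr_eq0.
rewrite -!mul_polyC derivM derivC mul0r add0r.
transitivity (((m.*2.+3)%:R^-1 : R)%:P * (h^`() * V - (m.*2.+3)%:R * h * V^`())).
  move: Hh Hc; set c := _%:P; set h' := h^`(); clearbody h h' c => _ _.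
  rewrite -!muln2 -[(m.+1 * 2)%N]/((m * 2).+2). ring.
by rewrite Hh mulrA Hc mul1r.
Qed.

Lemma famP (R : numFieldType) (a b k : R) (U V T N D : {poly R}) (m : nat) :
  V != 0 -> k != 0 -> T = a%:P * U ^+ 2 + b%:P * V ^+ 2 ->
  k%:P * (N * V ^+ (m.*2.+2)) = T ^+ m * (U^`() * V - U * V^`()) * D ->
  has_rational_antiderivative N D.
Proof.
move=> V0 k0 HT H.
exists (k^-1 *: gseq b U V T m), (V ^+ (m.*2.+1)); split; first exact: expf_neq0.
have G := @gseqP R a b U V T m HT.
have Hk : k^-1%:P * k%:P = 1 by rewrite -polyCM mulVf.
rewrite -mul_polyC !derivE deriv_exp succnK.
move: G H; set g := gseq b U V T m; set g' := g^`(); set Vm := V ^+ m.*2 => G H.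
rewrite !exprS -/Vm in H *.
transitivity (k^-1%:P * Vm * ((g' * V - (m.*2.+1)%:R * g * V^`()) * D)).
  clearbody g g' Vm. rewrite -!muln2. ring.
rewrite G -H.
transitivity ((k^-1%:P * k%:P) * (N * (V * Vm) ^+ 2)).
  clearbody Vm. ring.
rewrite Hk mul1r; ring.
Qed.

From mathcomp Require Import zify.

Section Aux.
Variable R : numFieldType.
Implicit Types (f : {poly R}) (n : nat).
Lemma pnum_nat f n : pnum f (Posz n) = f ^+ n. Proof. by []. Qed.
Lemma pden_nat f n : pden f (Posz n) = 1. Proof. by []. Qed.
Lemma pnum_neg f n : pnum f (Negz n) = 1. Proof. by []. Qed.
Lemma pden_neg f n : pden f (Negz n) = f ^+ n.+1. Proof. by []. Qed.
Lemma pnum0 f : pnum f 0 = 1. Proof. by rewrite /pnum /= expr0. Qed.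
Lemma pden0 f : pden f 0 = 1. Proof. by []. Qed.
Lemma pow_odd f n : f ^+ (n.*2.+1) = f * (f ^+ 2) ^+ n.
Proof. by rewrite exprS -muln2 mulnC exprM. Qed.
Lemma neq0_at0 f : f.[0] != 0 -> f != 0.
Proof. by apply: contraNneq => ->; rewrite horner0. Qed.
Lemma f1_neq0 : f1 R != 0.
Proof. by apply: neq0_at0; rewrite /f1 !hornerE /= expr0n subr0 oner_neq0. Qed.
Lemma f2_neq0 : f2 R != 0.
Proof. by apply: neq0_at0; rewrite /f2 !hornerE /= expr0n /= subr0 oner_neq0. Qed.
Lemma f3_neq0 : f3 R != 0.
Proof. by apply: neq0_at0; rewrite /f3 -mul_polyC !hornerE /= ?expr0n /= ?mulr0 ?subr0 ?oner_neq0. Qed.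
End Aux.

Ltac nz := repeat match goal with
  | |- is_true (_ * _ != 0) => apply: mulf_neq0
  | |- is_true (_ ^+ _ != 0) => apply: expf_neq0 end;
  first [exact: f1_neq0 | exact: f2_neq0 | exact: f3_neq0 | by rewrite polyX_eq0
        | by rewrite polyC_eq0 pnatr_eq0].


Lemma fam3 (R : numFieldType) (m : nat) (a1 a2 a3 : int) :

  let m' := (m%:Z)%R in
  (a1, a2, a3) = (0, - (2 * m' + 2), 2 * m' + 1) -> 
  has_rational_antiderivative (integrand_num R a1 a2 a3) (integrand_den R a1 a2 a3).
Proof.
move=> m' [E1 E2 E3].
have hs : a1 + a2 + a3 + 1 = 0 by rewrite E1 E2 E3 /m'; lia.
have h2 : a2 = Negz (m.*2.+1) by rewrite E2 NegzE /m'; lia.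
have h3 : a3 = Posz (m.*2.+1) by rewrite E3 /m'; lia.
rewrite /integrand_num /integrand_den hs E1 h2 h3 !(pnum0, pden0, pnum_nat, pden_nat, pnum_neg, pden_neg).
apply: (@famP R 5 (-4) (-1) (1 + 'X^2) (f2 R) (f3 R ^+ 2) _ _ m).
- by apply: neq0_at0; rewrite /f2 !hornerE /= expr0n /= subr0 oner_neq0.
- by rewrite oppr_eq0 oner_neq0.
- rewrite /f2 /f3 -mul_polyC; ring.
rewrite pow_odd; set P := f2 R ^+ _; set Tm := (_ ^+ 2) ^+ m.
rewrite /f2 /f3 -!mul_polyC !derivE; clearbody P Tm; ring.
Qed.

Lemma fam1 (R : numFieldType) (m : nat) (a1 a2 a3 : int) :
  let m' := (m%:Z)%R in
  (a1, a2, a3) = (2 * m' + 1, 0, 0) ->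
  has_rational_antiderivative (integrand_num R a1 a2 a3) (integrand_den R a1 a2 a3).
Proof.
move=> m' [E1 E2 E3].
have hs : a1 + a2 + a3 + 1 = Posz (m.*2.+2) by rewrite E1 E2 E3 /m'; lia.
have h1 : a1 = Posz (m.*2.+1) by rewrite E1 /m'; lia.
rewrite /integrand_num /integrand_den hs h1 E2 E3 !(pnum0, pden0, pnum_nat, pden_nat, pnum_neg, pden_neg).
apply: (@famP R 1 (-4) (-1) (1 + 'X^2) 'X (f1 R ^+ 2) _ _ m).
- by rewrite polyX_eq0.
- by rewrite oppr_eq0 oner_neq0.
- rewrite /f1; ring.
rewrite pow_odd; set P := 'X ^+ (m.*2.+2); set Tm := (_ ^+ 2) ^+ m.
rewrite /f1 !derivE; clearbody P Tm; ring.
Qed.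

Lemma fam2 (R : numFieldType) (m : nat) (a1 a2 a3 : int) :
  let m' := (m%:Z)%R in
  (a1, a2, a3) = (- (2 * m' + 2), 0, 0) ->
  has_rational_antiderivative (integrand_num R a1 a2 a3) (integrand_den R a1 a2 a3).
Proof.
move=> m' [E1 E2 E3].
have hs : a1 + a2 + a3 + 1 = Negz (m.*2) by rewrite E1 E2 E3 NegzE /m'; lia.
have h1 : a1 = Negz (m.*2.+1) by rewrite E1 NegzE /m'; lia.
rewrite /integrand_num /integrand_den hs h1 E2 E3 !(pnum0, pden0, pnum_nat, pden_nat, pnum_neg, pden_neg).
apply: (@famP R 1 (-1) (4 ^+ m.+1) (1 + 'X^2) (f1 R) (4%:P * 'X ^+ 2) _ _ m).
- exact: f1_neq0.
- by rewrite expf_neq0 // pnatr_eq0.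
- rewrite /f1; ring.
rewrite pow_odd polyC_exp exprS [(4%:P * _) ^+ m]exprMn; set P := f1 R ^+ (m.*2.+2); set Tm := ('X ^+ 2) ^+ m.
set Cm := (4%:P) ^+ m.
rewrite /f1 !derivE; clearbody P Tm Cm; ring.
Qed.

Lemma fam4 (R : numFieldType) (m : nat) (a1 a2 a3 : int) :
  let m' := (m%:Z)%R in
  (a1, a2, a3) = (0, 2 * m' + 1, - (2 * m' + 2)) ->
  has_rational_antiderivative (integrand_num R a1 a2 a3) (integrand_den R a1 a2 a3).
Proof.
move=> m' [E1 E2 E3].
have hs : a1 + a2 + a3 + 1 = 0 by rewrite E1 E2 E3 /m'; lia.
have h2 : a2 = Posz (m.*2.+1) by rewrite E2 /m'; lia.
have h3 : a3 = Negz (m.*2.+1) by rewrite E3 NegzE /m'; lia.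
rewrite /integrand_num /integrand_den hs E1 h2 h3 !(pnum0, pden0, pnum_nat, pden_nat, pnum_neg, pden_neg).
apply: (@famP R 5 (-1) (4 ^+ m.+1) (1 + 'X^2) (f3 R) (4%:P * f2 R ^+ 2) _ _ m).
- exact: f3_neq0.
- by rewrite expf_neq0 // pnatr_eq0.
- rewrite /f2 /f3 -mul_polyC; ring.
rewrite pow_odd polyC_exp exprS [(4%:P * _) ^+ m]exprMn; set P := f3 R ^+ (m.*2.+2); set Tm := (f2 R ^+ 2) ^+ m.
set Cm := (4%:P) ^+ m.
rewrite /f2 /f3 -!mul_polyC !derivE; clearbody P Tm Cm; ring.
Qed.

Lemma spor0 (R : numFieldType) :
  has_rational_antiderivative (integrand_num R 0 (-2) 1) (integrand_den R 0 (-2) 1).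
Proof.
have -> : integrand_num R 0 (-2) 1 = f1 R ^+ 0 * 1 * f3 R ^+ 1 * 1 by [].
have -> : integrand_den R 0 (-2) 1 = 1 * f2 R ^+ 2 * 1 * 'X ^+ 0 by [].
exists (- (2%:R)%:P * 'X^0 - (1%:R)%:P * 'X^1), ((1%:R)%:P * f2 R ^+ 1); split.
  nz.
rewrite /f1 /f2 /f3 -?mul_polyC !(derivE, deriv_exp); ring.
Qed.

Lemma spor1 (R : numFieldType) :
  has_rational_antiderivative (integrand_num R 1 0 0) (integrand_den R 1 0 0).
Proof.
have -> : integrand_num R 1 0 0 = f1 R ^+ 1 * f2 R ^+ 0 * f3 R ^+ 0 * 1 by [].
have -> : integrand_den R 1 0 0 = 1 * 1 * 1 * 'X ^+ 2 by [].
exists (- (1%:R)%:P * 'X^0 - (1%:R)%:P * 'X^2), ((1%:R)%:P * 'X ^+ 1); split.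
  nz.
rewrite /f1 /f2 /f3 -?mul_polyC !(derivE, deriv_exp); ring.
Qed.

Lemma spor2 (R : numFieldType) :
  has_rational_antiderivative (integrand_num R (-2) 0 0) (integrand_den R (-2) 0 0).
Proof.
have -> : integrand_num R (-2) 0 0 = 1 * f2 R ^+ 0 * f3 R ^+ 0 * 'X ^+ 1 by [].
have -> : integrand_den R (-2) 0 0 = f1 R ^+ 2 * 1 * 1 * 1 by [].
exists ((1%:R)%:P * 'X^0), ((2%:R)%:P * f1 R ^+ 1); split.
  nz.
rewrite /f1 /f2 /f3 -?mul_polyC !(derivE, deriv_exp); ring.
Qed.

Lemma spor3 (R : numFieldType) :
  has_rational_antiderivative (integrand_num R 0 1 (-2)) (integrand_den R 0 1 (-2)).
Proof.
have -> : integrand_num R 0 1 (-2) = f1 R ^+ 0 * f2 R ^+ 1 * 1 * 1 by [].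
have -> : integrand_den R 0 1 (-2) = 1 * 1 * f3 R ^+ 2 * 'X ^+ 0 by [].
exists ((1%:R)%:P * 'X^0 - (2%:R)%:P * 'X^1), ((2%:R)%:P * f3 R ^+ 1); split.
  nz.
rewrite /f1 /f2 /f3 -?mul_polyC !(derivE, deriv_exp); ring.
Qed.

Lemma spor4 (R : numFieldType) :
  has_rational_antiderivative (integrand_num R 1 (-4) 0) (integrand_den R 1 (-4) 0).
Proof.
have -> : integrand_num R 1 (-4) 0 = f1 R ^+ 1 * 1 * f3 R ^+ 0 * 'X ^+ 2 by [].
have -> : integrand_den R 1 (-4) 0 = 1 * f2 R ^+ 4 * 1 * 1 by [].
exists ((2%:R)%:P * 'X^0 + (6%:R)%:P * 'X^1 - (5%:R)%:P * 'X^3), ((15%:R)%:P * f2 R ^+ 3); split.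
  nz.
rewrite /f1 /f2 /f3 -?mul_polyC !(derivE, deriv_exp); ring.
Qed.

Lemma spor5 (R : numFieldType) :
  has_rational_antiderivative (integrand_num R 0 2 1) (integrand_den R 0 2 1).
Proof.
have -> : integrand_num R 0 2 1 = f1 R ^+ 0 * f2 R ^+ 2 * f3 R ^+ 1 * 1 by [].
have -> : integrand_den R 0 2 1 = 1 * 1 * 1 * 'X ^+ 4 by [].
exists (- (1%:R)%:P * 'X^0 + (3%:R)%:P * 'X^1 + (30%:R)%:P * 'X^2 + (30%:R)%:P * 'X^4 - (3%:R)%:P * 'X^5 - (1%:R)%:P * 'X^6), ((3%:R)%:P * 'X ^+ 3); split.
  nz.
rewrite /f1 /f2 /f3 -?mul_polyC !(derivE, deriv_exp); ring.
Qed.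

Lemma spor6 (R : numFieldType) :
  has_rational_antiderivative (integrand_num R (-4) 1 2) (integrand_den R (-4) 1 2).
Proof.
have -> : integrand_num R (-4) 1 2 = 1 * f2 R ^+ 1 * f3 R ^+ 2 * 1 by [].
have -> : integrand_den R (-4) 1 2 = f1 R ^+ 4 * 1 * 1 * 'X ^+ 0 by [].
exists (- (29%:R)%:P * 'X^0 + (6%:R)%:P * 'X^1 + (66%:R)%:P * 'X^2 - (21%:R)%:P * 'X^4 - (6%:R)%:P * 'X^5), ((6%:R)%:P * f1 R ^+ 3); split.
  nz.
rewrite /f1 /f2 /f3 -?mul_polyC !(derivE, deriv_exp); ring.
Qed.

Lemma spor7 (R : numFieldType) :
  has_rational_antiderivative (integrand_num R 2 0 (-4)) (integrand_den R 2 0 (-4)).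
Proof.
have -> : integrand_num R 2 0 (-4) = f1 R ^+ 2 * f2 R ^+ 0 * 1 * 'X ^+ 1 by [].
have -> : integrand_den R 2 0 (-4) = 1 * 1 * f3 R ^+ 4 * 1 by [].
exists (- (1%:R)%:P * 'X^0 + (12%:R)%:P * 'X^1 - (30%:R)%:P * 'X^2 + (20%:R)%:P * 'X^3 + (15%:R)%:P * 'X^4), ((30%:R)%:P * f3 R ^+ 3); split.
  nz.
rewrite /f1 /f2 /f3 -?mul_polyC !(derivE, deriv_exp); ring.
Qed.

Lemma spor8 (R : numFieldType) :
  has_rational_antiderivative (integrand_num R 0 (-5) 1) (integrand_den R 0 (-5) 1).
Proof.
have -> : integrand_num R 0 (-5) 1 = f1 R ^+ 0 * 1 * f3 R ^+ 1 * 'X ^+ 3 by [].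
have -> : integrand_den R 0 (-5) 1 = 1 * f2 R ^+ 5 * 1 * 1 by [].
exists ((2%:R)%:P * 'X^0 + (8%:R)%:P * 'X^1 + (4%:R)%:P * 'X^2 - (16%:R)%:P * 'X^3 - (5%:R)%:P * 'X^4), ((20%:R)%:P * f2 R ^+ 4); split.
  nz.
rewrite /f1 /f2 /f3 -?mul_polyC !(derivE, deriv_exp); ring.
Qed.

Lemma spor9 (R : numFieldType) :
  has_rational_antiderivative (integrand_num R 1 3 0) (integrand_den R 1 3 0).
Proof.
have -> : integrand_num R 1 3 0 = f1 R ^+ 1 * f2 R ^+ 3 * f3 R ^+ 0 * 1 by [].
have -> : integrand_den R 1 3 0 = 1 * 1 * 1 * 'X ^+ 5 by [].
exists (- (1%:R)%:P * 'X^0 - (4%:R)%:P * 'X^1 + (2%:R)%:P * 'X^2 + (32%:R)%:P * 'X^3 + (32%:R)%:P * 'X^5 - (2%:R)%:P * 'X^6 - (4%:R)%:P * 'X^7 + (1%:R)%:P * 'X^8), ((4%:R)%:P * 'X ^+ 4); split.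
  nz.
rewrite /f1 /f2 /f3 -?mul_polyC !(derivE, deriv_exp); ring.
Qed.

Lemma spor10 (R : numFieldType) :
  has_rational_antiderivative (integrand_num R (-5) 0 3) (integrand_den R (-5) 0 3).
Proof.
have -> : integrand_num R (-5) 0 3 = 1 * f2 R ^+ 0 * f3 R ^+ 3 * 'X ^+ 1 by [].
have -> : integrand_den R (-5) 0 3 = f1 R ^+ 5 * 1 * 1 * 1 by [].
exists (- (7%:R)%:P * 'X^0 + (29%:R)%:P * 'X^2 - (8%:R)%:P * 'X^3 - (21%:R)%:P * 'X^4 - (8%:R)%:P * 'X^5 - (1%:R)%:P * 'X^6), ((2%:R)%:P * f1 R ^+ 4); split.
  nz.
rewrite /f1 /f2 /f3 -?mul_polyC !(derivE, deriv_exp); ring.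
Qed.

Lemma spor11 (R : numFieldType) :
  has_rational_antiderivative (integrand_num R 3 1 (-5)) (integrand_den R 3 1 (-5)).
Proof.
have -> : integrand_num R 3 1 (-5) = f1 R ^+ 3 * f2 R ^+ 1 * 1 * 1 by [].
have -> : integrand_den R 3 1 (-5) = 1 * 1 * f3 R ^+ 5 * 'X ^+ 0 by [].
exists ((1%:R)%:P * 'X^0 - (6%:R)%:P * 'X^1 + (37%:R)%:P * 'X^2 - (98%:R)%:P * 'X^3 + (35%:R)%:P * 'X^4 + (110%:R)%:P * 'X^5 + (55%:R)%:P * 'X^6 + (10%:R)%:P * 'X^7), ((10%:R)%:P * f3 R ^+ 4); split.
  nz.
rewrite /f1 /f2 /f3 -?mul_polyC !(derivE, deriv_exp); ring.
Qed.

Theorem theorem5 (R : numFieldType) (a1 a2 a3 : int) :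
  special_triple a1 a2 a3 ->
  has_rational_antiderivative (integrand_num R a1 a2 a3) (integrand_den R a1 a2 a3).
Proof.
case=> [Hin | [m /= [H|[H|[H|H]]]]].
- move: Hin.
  do 12?[rewrite in_cons => /predU1P [[-> -> ->] | ]];
    try (first [exact: spor0 | exact: spor1 | exact: spor2 | exact: spor3
               | exact: spor4 | exact: spor5 | exact: spor6 | exact: spor7
               | exact: spor8 | exact: spor9 | exact: spor10 | exact: spor11]).
  by rewrite in_nil.
- exact: fam3 H.
- exact: fam1 H.
- exact: fam2 H.
- exact: fam4 H.
Qed.
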